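(* Let $C$ be a subcubic chain of a graph $G$ and let $e$ be a cut-edge of $C$. Then $\delta(G,e)=\delta(G/C,e_{G/C})+\delta(\overline C,e_C)$ and $\widehat\delta(G,e)=\widehat\delta(G/C,e_{G/C})+\widehat\delta(\overline C,e_C)$.
   Context: Graphs are finite and may have loops and parallel edges unless called simple; a loop contributes 2 to the degree of its vertex, and a graph is subcubic if every vertex has degree at most 3. $n(G)$ is the number of vertices of $G$ and $n_2(G)$ the number of vertices of degree 2. A cycle is a connected 2-regular subgraph (so a loop, or a pair of parallel edges, forms a cycle). An even cover of $G$ is a spanning subgraph $F$ in which every vertex has degree 0 or 2; its excess is $\mathrm{exc}(F)=2c(F)+i(F)$, where $c(F)$ is the number of cycles and $i(F)$ the number of isolated vertices of $F$. For $e\in E(G)$, let $\mathcal E(G,e)$ (resp. $\widehat{\mathcal E}(G,e)$) be the set of even covers of $G$ containing (resp. not containing) $e$, and define $\mathrm{exc}(G,e)=\min_{F\in\mathcal E(G,e)}\mathrm{exc}(F)-2$, $\widehat{\mathrm{exc}}(G,e)=\min_{F\in\widehat{\mathcal E}(G,e)}\mathrm{exc}(F)$, $\delta(G,e)=\mathrm{exc}(G,e)-\frac{n(G)+n_2(G)}4$, $\widehat\delta(G,e)=\widehat{\mathrm{exc}}(G,e)-\frac{n(G)+n_2(G)}4$. A subcubic chain is a simple connected subcubic graph $C$ written as an alternating sequence $C=x e_0 B_1 e_1 B_2\cdots B_k e_k y$ ($k\ge 0$) such that: $\{e_0,\dots,e_k\}$ is exactly the set of cut-edges of $C$; the connected components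 of $C-\{e_0,\dots,e_k\}$ are $B_0,B_1,\dots,B_{k+1}$ with $V(B_0)=\{x\}$, $V(B_{k+1})=\{y\}$; each $B_i$ ($1\le i\le k$) is a single vertex or 2-connected; and $e_i$ joins a vertex of $B_i$ to a vertex of $B_{i+1}$ ($0\le i\le k$). Its endpoints are $x,y$ and its end edges are $e_0,e_k$. It is trivial if $k=0$. If $k\ge1$, let $x_1$ be the endpoint of $e_0$ in $B_1$ and $y_k$ the endpoint of $e_k$ in $B_k$; the closure of $C$ is $(\overline C,e_C)$ where $\overline C$ is obtained from $C-\{x,y\}$ by adding a new edge $e_C=x_1y_k$. If $G$ is a graph and $C=xe_0B_1\cdots B_ke_ky$ is a nontrivial subcubic chain contained in $G$ such that $C-\{x,y\}$ is a connected component of $G-\{e_0,e_k\}$, then $C$ is a subcubic chain of $G$; $G/C$ denotes the graph obtained from $G$ by deleting $V(C)\setminus\{x,y\}$ and adding a new edge $e_{G/C}$ joining $x$ and $y$. *)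

(* Defs.v *)
From HB Require Import structures.
From mathcomp Require Import all_boot all_order all_algebra.
Set Implicit Arguments. Unset Strict Implicit. Unset Printing Implicit Defensive.
Import Order.TTheory GRing.Theory Num.Theory.

(** Finite multigraphs (loops and parallel edges allowed): every edge has a
    pair of ends; a loop is an edge whose two ends coincide. *)
Record mgraph := MGraph {
  vert : finType;
  edge : finType;
  ends : edge -> vert * vert }.

Section Basics.
Variable G : mgraph.
Implicit Types (v w : vert G) (g : edge G) (A F : {set edge G}) (S : {set vert G}).

(** number of ends of g at v (a loop contributes 2) *)
Definition incid g v : nat := ((ends g).1 == v) + ((ends g).2 == v).

Definition deg_in A v : nat := \sum_(g in A) incid g v.
Definition deg v : nat := deg_in [set: edge G] v.

Definition n_of : nat := #|vert G|.
Definition n2_of : nat := #|[set v | deg v == 2]|.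

Definition adjA A : rel (vert G) :=
  fun u v => [exists g in A, (ends g == (u, v)) || (ends g == (v, u))].
Definition adj_on S A : rel (vert G) :=
  fun u v => [&& u \in S, v \in S & adjA A u v].
Definition connected_on S A : bool :=
  [forall u in S, forall v in S, connect (adj_on S A) u v].

Definition is_even_cover F : bool :=
  [forall v, (deg_in F v == 0) || (deg_in F v == 2)].
(** cycles of F = connected components of (V,F) containing an edge *)
Definition ncyc F : nat :=
  #|[set [set w | connect (adjA F) v w] | v in [set v | deg_in F v != 0]]|.
Definition niso F : nat := #|[set v | deg_in F v == 0]|.
Definition exc F : nat := 2 * ncyc F + niso F.

(** minimum over options, None = +infinity *)
Definition omin (a b : option nat) : option nat :=
  match a, b with
  | None, _ => b
  | _, None => a
  | Some x, Some y => Some (minn x y)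
  end.

Definition minexc (P : pred {set edge G}) : option nat :=
  \big[omin/None]_(F : {set edge G} | is_even_cover F && P F) Some (exc F).

Definition base_val : rat := (n_of + n2_of)%:R / 4%:R.

(** delta(G,e) and delta-hat(G,e); None = +infinity (min over empty set) *)
Definition delta (e : edge G) : option rat :=
  omap (fun m : nat => (m%:R - 2%:R - base_val)%R) (minexc (fun F => e \in F)).
Definition deltahat (e : edge G) : option rat :=
  omap (fun m : nat => (m%:R - base_val)%R) (minexc (fun F => e \notin F)).

Definition is_cut_edge S A g : bool :=
  (g \in A) && ~~ connected_on S (A :\ g).

Definition other_end g v : vert G :=
  if (ends g).1 == v then (ends g).2 else (ends g).1.

(** (VC, EC) is a subcubic chain x e0 B1 e1 ... Bk ek y, k >= 1 *)
Definition subcubic_chain (VC : {set vert G}) (EC : {set edge G})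
    (x y : vert G) (e0 ek : edge G) : Prop :=
  exists (k : nat) (es : nat -> edge G) (Bs : nat -> {set vert G}),
  let CUT := [set g | is_cut_edge VC EC g] in
  let comp v := [set w | connect (adj_on VC (EC :\: CUT)) v w] in
  [/\ [/\
      (forall g, g \in EC -> (ends g).1 \in VC /\ (ends g).2 \in VC),
      (forall g, g \in EC -> (ends g).1 != (ends g).2),
      (forall g g', g \in EC -> g' \in EC ->
         (ends g' = ends g \/ ends g' = ((ends g).2, (ends g).1)) -> g = g'),
      connected_on VC EC &
      (forall v, v \in VC -> deg_in EC v <= 3)],
   [/\ 1 <= k, es 0 = e0, es k = ek &
      (forall g, is_cut_edge VC EC g <-> exists2 i, i <= k & g = es i)] &
   [/\
      (forall v, v \in VC -> exists2 i, i <= k.+1 & comp v = Bs i),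
      (forall i, i <= k.+1 -> exists2 v, v \in VC & Bs i = comp v),
      (forall i j, i <= k.+1 -> j <= k.+1 -> Bs i = Bs j -> i = j) &
   [/\ Bs 0 = [set x], Bs k.+1 = [set y],
      (* each B_i (1 <= i <= k) is a single vertex or 2-connected *)
      (forall i, 1 <= i <= k ->
         #|Bs i| = 1 \/
         (3 <= #|Bs i| /\ forall z, z \in Bs i ->
                             connected_on (Bs i :\ z) (EC :\: CUT))) &
      (forall i, i <= k ->
         ((ends (es i)).1 \in Bs i /\ (ends (es i)).2 \in Bs i.+1) \/
         ((ends (es i)).2 \in Bs i /\ (ends (es i)).1 \in Bs i.+1))]]].

(** C is a subcubic chain of G: moreover C - {x,y} is a connected component
    of G - {e0, ek} *)
Definition subcubic_chain_of (VC : {set vert G}) (EC : {set edge G})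
    (x y : vert G) (e0 ek : edge G) : Prop :=
  let I := VC :\: [set x; y] in
  [/\ subcubic_chain VC EC x y e0 ek,
      I != set0,
      connected_on I (~: [set e0; ek]) &
      (forall g, g != e0 -> g != ek ->
         ((ends g).1 \in I) || ((ends g).2 \in I) ->
         [&& (ends g).1 \in I, (ends g).2 \in I & g \in EC])].

End Basics.

(** Generic construction: keep the vertices of S (plus a and b), keep the
    edges of A with both ends in S, and add one new edge joining a and b. *)
Section RestrictAdd.
Variables (G : mgraph) (S : {set vert G}) (A : {set edge G}) (a b : vert G).

Definition ra_set : {set vert G} := a |: (b |: S).
Definition ra_vert := {v : vert G | v \in ra_set}.
Definition ra_edge := option {g : edge G | [&& g \in A, (ends g).1 \in S & (ends g).2 \in S]}.

Lemma ra_in v : v \in S -> v \in ra_set.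
Proof. by move=> h; rewrite !inE h !orbT. Qed.
Lemma ra_a : a \in ra_set.
Proof. by rewrite !inE eqxx. Qed.
Lemma ra_b : b \in ra_set.
Proof. by rewrite !inE eqxx !orbT. Qed.
Lemma ra_p1 g : [&& g \in A, (ends g).1 \in S & (ends g).2 \in S] -> (ends g).1 \in S.
Proof. by case/and3P. Qed.
Lemma ra_p2 g : [&& g \in A, (ends g).1 \in S & (ends g).2 \in S] -> (ends g).2 \in S.
Proof. by case/and3P. Qed.

Definition ra_ends (o : ra_edge) : ra_vert * ra_vert :=
  match o with
  | None => (exist _ a ra_a, exist _ b ra_b)
  | Some g => (exist _ (ends (val g)).1 (ra_in (ra_p1 (valP g))),
               exist _ (ends (val g)).2 (ra_in (ra_p2 (valP g))))
  end.

Definition restrict_add : mgraph := @MGraph ra_vert ra_edge ra_ends.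
Definition new_edge : edge restrict_add := None.
End RestrictAdd.

(** G/C : delete the interior V(C)\{x,y}, add e_{G/C} = xy *)
Definition contract_chain (G : mgraph) (VC : {set vert G}) (x y : vert G) :=
  restrict_add (~: (VC :\: [set x; y])) [set: edge G] x y.

(** closure of C : C - {x,y} plus e_C = x1 yk *)
Definition chain_closure (G : mgraph) (VC : {set vert G}) (EC : {set edge G})
    (x y : vert G) (e0 ek : edge G) :=
  restrict_add (VC :\: [set x; y]) EC (other_end e0 x) (other_end ek y).

Definition oaddq (a b : option rat) : option rat :=
  match a, b with Some p, Some q => Some (p + q)%R | _, _ => None end.

Definition e_contract (G : mgraph) (VC : {set vert G}) (x y : vert G)
  : edge (contract_chain VC x y) := None.
Definition e_closure (G : mgraph) (VC : {set vert G}) (EC : {set edge G})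
    (x y : vert G) (e0 ek : edge G) : edge (chain_closure VC EC x y e0 ek) := None.

(* Main.v *)
Require Import Defs.
From mathcomp Require Import all_boot all_order all_algebra.
From mathcomp Require Import zify lra.
Set Implicit Arguments. Unset Strict Implicit. Unset Printing Implicit Defensive.

Lemma sum_option (T : finType) (F : option T -> nat) :
  \sum_(o : option T) F o = F None + \sum_(t : T) F (Some t).
Proof.
rewrite (bigD1 None) //=; congr (_ + _).
rewrite (reindex_omap Some (fun o => o)) //=; last by case.
by apply: eq_bigl => t; rewrite eqxx.
Qed.
Lemma sum_optionR (T : finType) (F : option T -> rat) :
  (\sum_(o : option T) F o = F None + \sum_(t : T) F (Some t))%R.
Proof.
rewrite (bigD1 None) //=; congr (_ + _)%R.
rewrite (reindex_omap Some (fun o => o)) //=; last by case.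
by apply: eq_bigl => t; rewrite eqxx.
Qed.
Lemma sum_sig (T : finType) (P : pred T) (F : T -> nat) :
  \sum_(u : {x | P x}) F (val u) = \sum_(x | P x) F x.
Proof.
rewrite (reindex_omap (val : {x | P x} -> T) insub) /=; last first.
  by move=> i Pi; rewrite insubT.
by apply: eq_bigl => -[i Pi] /=; rewrite Pi insubT /= eqxx.
Qed.
Lemma sum_sigR (T : finType) (P : pred T) (F : T -> rat) :
  (\sum_(u : {x | P x}) F (val u) = \sum_(x | P x) F x)%R.
Proof.
rewrite (reindex_omap (val : {x | P x} -> T) insub) /=; last first.
  by move=> i Pi; rewrite insubT.
by apply: eq_bigl => -[i Pi] /=; rewrite Pi insubT /= eqxx.
Qed.

Section Gen.
Variable G : mgraph.
Implicit Types (F : {set edge G}) (S : {set vert G}).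

Lemma sum_eqv (T : finType) (A : {set T}) (c : T) :
  \sum_(v in A) (c == v : nat) = (c \in A).
Proof.
rewrite big_mkcond (bigD1 c) //= eqxx big1 ?addn0; first by case: (c \in A).
by move=> v nv; rewrite eq_sym (negbTE nv); case: (v \in A).
Qed.

Lemma sum_bool_card (T : finType) (A : {set T}) (b : pred T) :
  \sum_(g in A) (b g : nat) = #|[set g in A | b g]|.
Proof.
rewrite -sum1_card [RHS]big_mkcond [LHS]big_mkcond /=.
by apply: eq_bigr => g _; rewrite inE; case: (g \in A); case: (b g).
Qed.

Lemma sum_deg_S F S :
  \sum_(v in S) deg_in F v =
  \sum_(g in F) (((ends g).1 \in S) + ((ends g).2 \in S)).
Proof.
rewrite /deg_in exchange_big /=; apply: eq_bigr => g _.
by rewrite /incid big_split /= !sum_eqv.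
Qed.

Lemma parity F S : is_even_cover F ->
  ~~ odd #|[set g in F | ((ends g).1 \in S) != ((ends g).2 \in S)]|.
Proof.
move=> /forallP ev.
have H1 : ~~ odd (\sum_(v in S) deg_in F v).
  apply: (big_ind (fun n => ~~ odd n)) => //.
    by move=> m n hm hn; rewrite oddD (negbTE hm) (negbTE hn).
  by move=> v _; case/orP: (ev v) => /eqP ->.
move: H1; rewrite sum_deg_S.
have -> : \sum_(g in F) (((ends g).1 \in S) + ((ends g).2 \in S)) =
  \sum_(g in F) ((((ends g).1 \in S) != ((ends g).2 \in S)) : nat) +
  2 * \sum_(g in F) ((((ends g).1 \in S) && ((ends g).2 \in S)) : nat).
  rewrite big_distrr -big_split /=; apply: eq_bigr => g _.
  by case: ((ends g).1 \in S); case: ((ends g).2 \in S).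
by rewrite oddD oddM /= addbF sum_bool_card.
Qed.

Lemma adjA_sym F : symmetric (adjA F).
Proof.
move=> u v; apply/existsP/existsP => -[g /andP[gF h]]; exists g;
  by rewrite gF /= orbC.
Qed.

Lemma connectA_sym F u v : connect (adjA F) u v = connect (adjA F) v u.
Proof. exact: (sym_connect_sym (@adjA_sym F)). Qed.

Lemma adj_on_sym S F : symmetric (adj_on S F).
Proof. by move=> u v; rewrite /adj_on adjA_sym andbCA. Qed.

Lemma adjA_deg F u v : adjA F u v -> deg_in F v != 0.
Proof.
case/existsP => g /andP[gF /orP[] /eqP E]; rewrite /deg_in -lt0n;
  rewrite (bigD1 g) //= /incid E /= eqxx ?addn1 ?addn0; by [].
Qed.
End Gen.

Lemma connect_map (T T' : finType) (r : rel T) (r' : rel T') (f : T -> T') :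
  (forall x y, r x y -> connect r' (f x) (f y)) ->
  forall x y, connect r x y -> connect r' (f x) (f y).
Proof.
move=> h x y /connectP[p pth ->]; elim: p x pth => //= z p IH x /andP[rxz pth].
exact: connect_trans (h _ _ rxz) (IH _ pth).
Qed.

Section Gen2.
Variable G : mgraph.
Implicit Types (F : {set edge G}) (S : {set vert G}).

Lemma edge_adj F g : g \in F -> adjA F (ends g).1 (ends g).2.
Proof. by move=> gF; apply/existsP; exists g; rewrite gF -surjective_pairing eqxx. Qed.

Lemma conn_deg F u v : connect (adjA F) u v -> deg_in F u != 0 -> deg_in F v != 0.
Proof.
move/connectP=> [p pth ->]; elim: p u pth => //= z p IH u /andP[h pth] _.
exact: (IH z pth (adjA_deg h)).
Qed.

Lemma cl_eq F u v : connect (adjA F) u v ->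
  [set w | connect (adjA F) u w] = [set w | connect (adjA F) v w].
Proof.
move=> huv; apply/setP => w; rewrite !inE; apply/idP/idP => h.
  by apply: connect_trans h; rewrite connectA_sym.
exact: connect_trans huv h.
Qed.
End Gen2.

Lemma adj_conn_eq (G : mgraph) (F : {set edge G}) u w1 w2 :
  adjA F w1 w2 -> connect (adjA F) u w1 = connect (adjA F) u w2.
Proof.
move=> h; apply/idP/idP => c.
  exact: connect_trans c (connect1 h).
by apply: connect_trans c (connect1 _); rewrite adjA_sym.
Qed.

Lemma card_set_sum (T : finType) (p : pred T) : #|[set u | p u]| = \sum_u (p u : nat).
Proof.
rewrite -sum1_card big_mkcond /=; apply: eq_bigr => u _; rewrite inE.
by case: (p u).
Qed.

Lemma conn_set_eq (T : finType) (r : rel T) : symmetric r -> forall u v,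
  connect r u v -> [set w | connect r u w] = [set w | connect r v w].
Proof.
move=> sr u v huv; apply/setP => w; rewrite !inE; apply/idP/idP => h.
  by apply: connect_trans h; rewrite (sym_connect_sym sr).
exact: connect_trans huv h.
Qed.

Lemma conn_on_mem (G : mgraph) (S : {set vert G}) (A : {set edge G}) u v :
  connect (adj_on S A) u v -> u \in S -> v \in S.
Proof.
move/connectP=> [p pth ->]; elim: p u pth => //= z p IH u /andP[h pth] _.
by apply: (IH z pth); case/and3P: h.
Qed.

Lemma parity2 (G : mgraph) (F : {set edge G}) (S : {set vert G}) p q :
  is_even_cover F -> p != q ->
  (forall g, (((ends g).1 \in S) != ((ends g).2 \in S)) = (g == p) || (g == q)) ->
  (p \in F) = (q \in F).
Proof.
move=> ev pq hc; have := parity S ev.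
have -> : [set g in F | ((ends g).1 \in S) != ((ends g).2 \in S)] =
          [set g in F | (g == p) || (g == q)].
  by apply/setP => g; rewrite !inE hc.
case pF: (p \in F); case qF: (q \in F) => //.
- have -> : [set g in F | (g == p) || (g == q)] = [set p].
    apply/setP => g; rewrite !inE.
    case: (eqVneq g p) => [->|gp]; first by rewrite pF (negbTE pq).
    by case: (eqVneq g q) => [->|gq] //=; rewrite ?pF ?qF ?andbF ?eqxx ?(negbTE gp) ?eq_sym ?(negbTE pq).
  by rewrite cards1.
- have -> : [set g in F | (g == p) || (g == q)] = [set q].
    apply/setP => g; rewrite !inE.
    case: (eqVneq g p) => [->|gp]; first by rewrite pF (negbTE pq).
    by case: (eqVneq g q) => [->|gq] //=; rewrite ?pF ?qF ?andbF ?eqxx ?(negbTE gp) ?eq_sym ?(negbTE pq).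
  by rewrite cards1.
Qed.

Import GRing.Theory Num.Theory.

Lemma sum_inv_card (T : finType) (C : {set T}) : C != set0 ->
  (\sum_(v in C) 1 / (#|C|)%:R = 1 :> rat)%R.
Proof.
move=> Cn; rewrite sumr_const -[((_ / _) *+ _)%R]mulr_natr mul1r mulVf //.
by rewrite pnatr_eq0 -lt0n card_gt0.
Qed.

Lemma ncyc_sum (G : mgraph) (F : {set edge G}) :
  ((ncyc F)%:R = \sum_(v | deg_in F v != 0) 1 / (#|[set w | connect (adjA F) v w]|)%:R :> rat)%R.
Proof.
set P := [set v | deg_in F v != 0].
rewrite (eq_bigl (mem P)); last by move=> v; rewrite /= inE.
rewrite (partition_big_imset (fun v => [set w | connect (adjA F) v w])) /=.
rewrite /ncyc -/P -sum1_card natr_sum; apply: eq_bigr => C /imsetP[v0 v0P ->].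
rewrite (eq_bigr (fun _ => 1 / (#|[set w | connect (adjA F) v0 w]|)%:R))%R; last first.
  by move=> v /andP[_ /eqP ->].
have -> : (\sum_(i in P | [set w | connect (adjA F) i w] == [set w | connect (adjA F) v0 w])
   (1 / (#|[set w | connect (adjA F) v0 w]|)%:R) =
   \sum_(i in [set w | connect (adjA F) v0 w])
   (1 / (#|[set w | connect (adjA F) v0 w]|)%:R :> rat))%R.
  apply: eq_bigl => v; rewrite [in RHS]inE; apply/andP/idP => [[_ /eqP E]|h].
    have : v \in [set w | connect (adjA F) v w] by rewrite inE connect0.
    by rewrite E inE.
  split; first by rewrite inE; apply: (conn_deg h); rewrite inE in v0P.
  by rewrite (cl_eq h).
rewrite sum_inv_card //; apply/set0Pn; exists v0; by rewrite inE connect0.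
Qed.

Lemma sum_class (G : mgraph) (F : {set edge G}) (a0 : vert G) (S : {set vert G}) :
  a0 \in S -> deg_in F a0 != 0 ->
  (\sum_(v in S | (deg_in F v != 0) && connect (adjA F) a0 v)
     1 / (#|[set w | connect (adjA F) v w] :&: S|)%:R = 1 :> rat)%R.
Proof.
move=> a0S Da0.
rewrite (eq_bigr (fun _ => 1 / (#|[set w | connect (adjA F) a0 w] :&: S|)%:R))%R; last first.
  by move=> v /andP[_ /andP[_ h]]; rewrite (cl_eq h).
rewrite (eq_bigl (mem ([set w | connect (adjA F) a0 w] :&: S))); last first.
  move=> v; rewrite /= !inE; apply/andP/andP => [[vS /andP[_ c]]|[c vS]] //.
  by split=> //; rewrite c andbT; apply: conn_deg c Da0.
rewrite sum_inv_card //; apply/set0Pn; exists a0; by rewrite !inE connect0.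
Qed.

Lemma deg_pos (G : mgraph) (F : {set edge G}) g v : g \in F -> incid g v != 0 -> deg_in F v != 0.
Proof.
move=> gF; rewrite /deg_in (bigD1 g) //= -!lt0n => h.
exact: leq_trans h (leq_addr _ _).
Qed.

Lemma ncyc_split (G : mgraph) (F : {set edge G}) (a0 : vert G) (c : bool) :
  (c -> deg_in F a0 != 0) ->
  ((ncyc F)%:R = \sum_(v | (deg_in F v != 0) && ~~ (c && connect (adjA F) a0 v))
      1 / (#|[set w | connect (adjA F) v w]|)%:R + (c : nat)%:R :> rat)%R.
Proof.
move=> hc; rewrite ncyc_sum (bigID (fun v => c && connect (adjA F) a0 v)) /= addrC.
congr (_ + _)%R; case: c hc => /= [h|_]; last by rewrite big_pred0 // => v; rewrite andbF.
transitivity (\sum_(v in [set: vert G] | (deg_in F v != 0) && connect (adjA F) a0 v)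
     1 / (#|[set w | connect (adjA F) v w] :&: setT|)%:R :> rat)%R.
  by apply: eq_big => [v|v _]; rewrite ?in_setT ?setIT.
by rewrite sum_class ?in_setT ?h.
Qed.

Section Side.
Variables (G : mgraph) (S : {set vert G}) (A : {set edge G}) (a b : vert G) (c1 c2 : edge G).
Hypotheses (hA : forall g, (ends g).1 \in S -> (ends g).2 \in S -> g \in A)
 (haS : a \in S) (hbS : b \in S)
 (hcross : forall g, (((ends g).1 \in S) != ((ends g).2 \in S)) = (g == c1) || (g == c2))
 (hc12 : c1 != c2)
 (hc1a : forall v, v \in S -> incid c1 v = (v == a))
 (hc2b : forall v, v \in S -> incid c2 v = (v == b)).

Local Notation R := (restrict_add S A a b).

Lemma ra_setE : ra_set S a b = S.
Proof.
by apply/setP => v; rewrite !inE; case: eqP => [->|]; case: eqP => [->|] //=;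
  rewrite ?haS ?hbS.
Qed.

Lemma valS (u : vert R) : val u \in S.
Proof. have h := valP u; have e : forall w, w \in ra_set S a b -> w \in S by move=> w; rewrite ra_setE. exact: e. Qed.

Definition tr (F : {set edge G}) : {set edge R} :=
  [set o : edge R | if o is Some g then val g \in F else c1 \in F].

Lemma incid_Some (g : {g | [&& g \in A, (ends g).1 \in S & (ends g).2 \in S]}) (u : vert R) :
  incid (Some g : edge R) u = incid (val g) (val u).
Proof. by rewrite /incid /= -!val_eqE. Qed.

Lemma incid_None (u : vert R) :
  incid (None : edge R) u = (a == val u) + (b == val u).
Proof. by rewrite /incid /= -!val_eqE. Qed.

Lemma deg_tr (F : {set edge G}) : (c1 \in F) = (c2 \in F) -> forall u,
  deg_in (tr F) u = deg_in F (val u).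
Proof.
move=> h12 u; have vS := valS u; move: vS; set v := val u => vS.
pose f g := if g \in F then incid g v else 0.
rewrite /deg_in big_mkcond sum_option /=.
rewrite (eq_bigr (fun t => f (val t))); last by move=> t _; rewrite inE incid_Some.
rewrite (@sum_sig _ (fun g => [&& g \in A, (ends g).1 \in S & (ends g).2 \in S]) f).
rewrite [RHS]big_mkcond /=.
rewrite [RHS](eq_bigr (fun g => (if [&& g \in A, (ends g).1 \in S & (ends g).2 \in S] then f g else 0)
   + (if g == c1 then f g else 0) + (if g == c2 then f g else 0))); last first.
  move=> g _; have := hcross g.
  case P: [&& g \in A, (ends g).1 \in S & (ends g).2 \in S].
    case/and3P: P => _ e1 e2; rewrite e1 e2 /= => /esym/norP[/negbTE-> /negbTE->].
    by rewrite !addn0.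
  have [->|n1] := eqVneq g c1.
    by rewrite (negbTE hc12) => _; rewrite addn0.
  have [->|n2] //= := eqVneq g c2; rewrite !addn0 => hc.
  rewrite /f /incid; case: (g \in F) => //.
  move: P hc; case e1: ((ends g).1 \in S); case e2: ((ends g).2 \in S) => //=.
    by rewrite hA.
  move=> _ _; case: eqP => [E|_]; first by move: vS; rewrite -E e1.
  by case: eqP => [E|_] //; move: vS; rewrite -E e2.
rewrite !big_split /= -!big_mkcond !big_pred1_eq /f -h12 inE hc1a // hc2b //.
rewrite incid_None; case: (c1 \in F); rewrite ?addn0 //.
rewrite -addnA addnC !(eq_sym _ v) addnC addnA addnC addnA. reflexivity.
Qed.

Definition ua : vert R := exist _ a (ra_a S a b).
Definition ub : vert R := exist _ b (ra_b S a b).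
Definition lft (v : vert G) : vert R := odflt ua (insub v).

Lemma lftK v : v \in S -> val (lft v) = v.
Proof. by move=> vS; rewrite /lft insubT ?ra_in //. Qed.

Lemma valK' (u : vert R) : lft (val u) = u.
Proof. by apply: val_inj; rewrite lftK ?valS. Qed.

Lemma lft_a : lft a = ua.
Proof. by apply: val_inj; rewrite lftK. Qed.
Lemma lft_b : lft b = ub.
Proof. by apply: val_inj; rewrite lftK. Qed.

Lemma cross_end_gen c s : s \in S -> ((ends c).1 \in S) != ((ends c).2 \in S) ->
  incid c s = 1 -> exists s', s' \notin S /\ (ends c = (s, s') \/ ends c = (s', s)).
Proof.
move=> sS; rewrite /incid; case: (ends c) => p q /=.
case: (eqVneq p s) => [->|ps]; case: (eqVneq q s) => [->|qs] //=; rewrite ?sS //.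
  by move=> qS _; exists q; split => //; left.
by move=> pS _; exists p; split => //; [by move: pS; case: (p \in S) | right].
Qed.

Lemma c1_ends : exists a', a' \notin S /\ (ends c1 = (a, a') \/ ends c1 = (a', a)).
Proof. by apply: cross_end_gen => //; [rewrite hcross eqxx | rewrite hc1a ?eqxx]. Qed.
Lemma c2_ends : exists b', b' \notin S /\ (ends c2 = (b, b') \/ ends c2 = (b', b)).
Proof. by apply: cross_end_gen => //; [rewrite hcross eqxx orbT | rewrite hc2b ?eqxx]. Qed.

Variable F : {set edge G}.
Hypotheses (evF : is_even_cover F) (h12 : (c1 \in F) = (c2 \in F)).

Lemma L_ab : c1 \in F -> connect (adjA F) a b.
Proof.
move=> c1F.
set W := [set w | connect (adjA F) a w]; set S' := W :&: S.
set X := [set g in F | ((ends g).1 \in S') != ((ends g).2 \in S')].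
have hp : ~~ odd #|X| by apply: parity.
have inW g : g \in F -> ((ends g).1 \in W) = ((ends g).2 \in W).
  by move=> gF; rewrite !inE; apply: adj_conn_eq; apply: edge_adj.
have Xsub g : g \in X -> (g == c1) || (g == c2).
  rewrite inE => /andP[gF]; rewrite -hcross !inE.
  have := inW g gF; rewrite !inE => ->.
  by case: (connect _ _ _).
have c1X : c1 \in X.
  rewrite inE c1F /=; case: c1_ends => a' [a'S [] E]; rewrite E /= !inE haS andbT
   (negbTE a'S) andbF connect0 //.
have c2X : c2 \in X.
  apply: contraTT hp => c2X; have -> : X = [set c1].
    apply/setP => g; rewrite inE; apply/idP/idP => [gX|/eqP->//].
    by case/orP: (Xsub g gX) => // /eqP E; move: c2X; rewrite -E gX.
  by rewrite cards1.
move: c2X; rewrite inE => /andP[_]; case: c2_ends => b' [b'S [] E]; rewrite E /= !inE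
  (negbTE b'S) !andbF.
  by rewrite hbS andbT; case: (connect _ _ _).
by rewrite hbS andbT; case: (connect _ _ _).
Qed.

Lemma R_ab : c1 \in F -> adjA (tr F) ua ub.
Proof. by move=> c1F; apply/existsP; exists None; rewrite inE c1F eqxx. Qed.

Lemma R_edge g : g \in F -> (ends g).1 \in S -> (ends g).2 \in S ->
  adjA (tr F) (lft (ends g).1) (lft (ends g).2).
Proof.
move=> gF e1S e2S.
have P : [&& g \in A, (ends g).1 \in S & (ends g).2 \in S] by rewrite hA ?e1S ?e2S.
apply/existsP; exists (Some (exist _ g P)); rewrite inE /= gF /=.
by rewrite xpair_eqE -!val_eqE /= !lftK // !eqxx.
Qed.

Lemma L_up (u w : vert R) : connect (adjA (tr F)) u w -> connect (adjA F) (val u) (val w).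
Proof.
apply: connect_map => p q /existsP[[s|] /andP[oF /orP[]/eqP E]].
- rewrite inE /= in oF; case: E => <- <- /=; apply: connect1.
  exact: (edge_adj oF).
- rewrite inE /= in oF; case: E => <- <- /=; apply: connect1.
  by rewrite adjA_sym; exact: (edge_adj oF).
- rewrite inE /= in oF; case: E => <- <- /=; exact: L_ab.
- rewrite inE /= in oF; case: E => <- <- /=; rewrite connectA_sym; exact: L_ab.
Qed.

Lemma cross_end g p : g \in F -> ((ends g).1 \in S) != ((ends g).2 \in S) ->
  (p == (ends g).1) || (p == (ends g).2) -> p \in S ->
  c1 \in F /\ (forall u, connect (adjA (tr F)) u (lft p) = connect (adjA (tr F)) u ua).
Proof.
move=> gF cr pe pS; rewrite hcross in cr.
case/orP: cr => /eqP Eg; subst g.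
  have pa : p = a.
    by case: c1_ends pe => a' [a'S [] ->] /= /orP[]/eqP // Ep; rewrite Ep (negbTE a'S) in pS.
  by split=> // u; rewrite pa lft_a.
split; first by rewrite h12.
move=> u; have c1F : c1 \in F by rewrite h12.
have -> : lft p = ub.
  have pb : p = b.
    by case: c2_ends pe => b' [b'S [] ->] /= /orP[]/eqP // Ep; rewrite Ep (negbTE b'S) in pS.
  by rewrite pb lft_b.
by rewrite (adj_conn_eq u (R_ab c1F)).
Qed.

Lemma down (u : vert R) v : connect (adjA F) (val u) v ->
  if v \in S then connect (adjA (tr F)) u (lft v)
  else (c1 \in F) && connect (adjA (tr F)) u ua.
Proof.
pose Z := [pred v | if v \in S then connect (adjA (tr F)) u (lft v)
  else (c1 \in F) && connect (adjA (tr F)) u ua].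
have step g : g \in F -> ((ends g).1 \in Z) = ((ends g).2 \in Z).
  move=> gF; rewrite !inE.
  case e1: ((ends g).1 \in S); case e2: ((ends g).2 \in S) => //.
  - exact: adj_conn_eq (R_edge gF e1 e2).
  - have cr : ((ends g).1 \in S) != ((ends g).2 \in S) by rewrite e1 e2.
    have pe : ((ends g).1 == (ends g).1) || ((ends g).1 == (ends g).2) by rewrite eqxx.
    have [c1F ->] := cross_end gF cr pe e1.
    by rewrite c1F.
  - have cr : ((ends g).1 \in S) != ((ends g).2 \in S) by rewrite e1 e2.
    have pe : ((ends g).2 == (ends g).1) || ((ends g).2 == (ends g).2) by rewrite eqxx orbT.
    have [c1F ->] := cross_end gF cr pe e2.
    by rewrite c1F.
move=> /connectP[p pth ->].
have : val u \in Z by rewrite inE valS valK' connect0.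
elim: p (val u) pth => //= z p IH x /andP[/existsP[g /andP[gF /orP[]/eqP E]]] pth xZ;
  apply: IH pth _; move: (step g gF); rewrite E /= => h; first [by rewrite -h | by rewrite h].
Qed.

Lemma K1 (u w : vert R) : connect (adjA (tr F)) u w = connect (adjA F) (val u) (val w).
Proof.
apply/idP/idP; first exact: L_up.
by move/down; rewrite valS valK'.
Qed.

Lemma K2 (u : vert R) v : connect (adjA F) (val u) v -> v \notin S ->
  (c1 \in F) && connect (adjA F) a (val u).
Proof.
move=> /down h vS; move: h; rewrite (negbTE vS) => /andP[-> /=].
by rewrite K1 connectA_sym.
Qed.

Lemma K3 (u : vert R) : #|[set w | connect (adjA (tr F)) u w]| =
  #|[set w | connect (adjA F) (val u) w] :&: S|.
Proof.
rewrite -(card_imset _ val_inj); apply: eq_card => w; rewrite !inE.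
apply/imsetP/idP => [[w' ]|/andP[cw wS]].
  by rewrite inE K1 => cw ->; rewrite cw valS.
by exists (lft w); rewrite ?inE ?K1 ?lftK.
Qed.

Lemma ncyc_side : ((ncyc (tr F))%:R =
  \sum_(v in S | (deg_in F v != 0) && ~~ ((c1 \in F) && connect (adjA F) a v))
     1 / (#|[set w | connect (adjA F) v w]|)%:R + ((c1 \in F) : nat)%:R :> rat)%R.
Proof.
rewrite ncyc_sum big_mkcond /=.
rewrite (eq_bigr (fun u : vert R => (if deg_in F (val u) != 0 then
   1 / (#|[set w | connect (adjA F) (val u) w] :&: S|)%:R else 0)%R)); last first.
  by move=> u _; rewrite deg_tr // K3.
rewrite (sum_sigR (fun v => v \in ra_set S a b) (fun v => if deg_in F v != 0 then
   1 / (#|[set w | connect (adjA F) v w] :&: S|)%:R else 0)%R).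
rewrite ra_setE -big_mkcondr (bigID (fun v => (c1 \in F) && connect (adjA F) a v)) /= addrC.
congr (_ + _)%R.
  apply: eq_big => [v|v /andP[/andP[vS Dv] nQ]]; first by rewrite andbA.
  congr (1 / _%:R)%R; apply: eq_card => w; rewrite !inE; apply/andP/idP => [[]//|cw].
  split=> //; apply: contraNT nQ => wS.
  have := @K2 (lft v) w; rewrite lftK // => /(_ cw wS).
  by [].
case c1F: (c1 \in F); last by rewrite big_pred0 // => v; rewrite andbF.
have Da : deg_in F a != 0 by apply: (deg_pos c1F); rewrite hc1a // eqxx.
transitivity (\sum_(v in S | (deg_in F v != 0) && connect (adjA F) a v) 1 / (#|[set w | connect (adjA F) v w] :&: S|)%:R :> rat)%R; last by rewrite sum_class.
apply: eq_bigl => v; by rewrite andTb andbA.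
Qed.

Lemma sum_R (f : vert G -> nat) : \sum_(u : vert R) f (val u) = \sum_(v in S) f v.
Proof. by rewrite (sum_sig (fun v => v \in ra_set S a b)) ra_setE. Qed.

Lemma niso_side : niso (tr F) = \sum_(v in S) (deg_in F v == 0 : nat).
Proof.
rewrite /niso card_set_sum -sum_R; apply: eq_bigr => u _; by rewrite deg_tr.
Qed.

Lemma ev_tr : is_even_cover (tr F).
Proof. by apply/forallP => u; rewrite deg_tr //; move/forallP: evF. Qed.

Lemma None_tr : ((None : edge R) \in tr F) = (c1 \in F).
Proof. by rewrite inE. Qed.
End Side.

Section Side2.
Variables (G : mgraph) (S : {set vert G}) (A : {set edge G}) (a b : vert G) (c1 c2 : edge G).
Hypotheses (hA : forall g, (ends g).1 \in S -> (ends g).2 \in S -> g \in A)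
 (haS : a \in S) (hbS : b \in S)
 (hcross : forall g, (((ends g).1 \in S) != ((ends g).2 \in S)) = (g == c1) || (g == c2))
 (hc12 : c1 != c2)
 (hc1a : forall v, v \in S -> incid c1 v = (v == a))
 (hc2b : forall v, v \in S -> incid c2 v = (v == b)).
Local Notation R := (restrict_add S A a b).

Lemma n_side : n_of R = #|S|.
Proof. by rewrite /n_of card_sig (ra_setE haS hbS); apply: eq_card. Qed.

Lemma n2_side : n2_of R = \sum_(v in S) (deg v == 2 : nat).
Proof.
rewrite /n2_of /deg card_set_sum -(sum_R A haS hbS); apply: eq_bigr => u _.
rewrite -(deg_tr hA haS hbS hcross hc12 hc1a hc2b (F := [set: edge G])) ?inE //.
by rewrite /deg_in; congr (_ == 2); apply: eq_bigl => -[o|]; rewrite !inE.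
Qed.

Lemma tr_glue (F : {set edge G}) (F1 : {set edge R}) :
  (forall s, (val s \in F) = ((Some s : edge R) \in F1)) ->
  (c1 \in F) = ((None : edge R) \in F1) -> tr S A a b c1 F = F1.
Proof. by move=> h1 h2; apply/setP => -[s|]; rewrite inE. Qed.
End Side2.

Lemma omin_big (T : eqType) (r : seq T) (p : pred T) (h : T -> nat) :
  ((\big[omin/None]_(i <- r | p i) Some (h i) = None) -> forall i, i \in r -> p i -> False) /\
  (forall k, \big[omin/None]_(i <- r | p i) Some (h i) = Some k ->
     (exists2 i, (i \in r) && p i & h i = k) /\ (forall i, i \in r -> p i -> k <= h i)).
Proof.
elim: r => [|j r [IH1 IH2]]; first by rewrite big_nil; split.
rewrite big_cons; case pj: (p j); last first.
  split=> [E i|k E]; first by rewrite inE => /orP[/eqP->|]; [rewrite pj | exact: IH1].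
  have [[i ip hi] lo] := IH2 k E; split; first by exists i; rewrite // inE; case/andP: ip => -> ->; rewrite orbT.
  by move=> i0; rewrite inE => /orP[/eqP->|]; [rewrite pj | exact: lo].
case E: (\big[omin/None]_(i <- r | p i) Some (h i)) => [k'|] /=; split => // k [<-].
  have [[i ip hi] lo] := IH2 k' E; split.
    case: (leqP (h j) k') => hk.
      by exists j; rewrite ?inE ?eqxx ?pj.
    exists i; first by rewrite inE; case/andP: ip => -> ->; rewrite orbT.
    exact: hi.
  move=> i0; rewrite inE => /orP[/eqP->|ir pi]; first by rewrite geq_minl.
  exact: leq_trans (geq_minr _ _) (lo i0 ir pi).
split; first by exists j; rewrite ?inE ?eqxx ?pj.
move=> i; rewrite inE => /orP[/eqP->//|ir pi]; by case: (IH1 E i ir pi).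
Qed.

Section MinExc.
Variable G : mgraph.
Implicit Types (F : {set edge G}) (P : pred {set edge G}).

Lemma minexc_none P : minexc P = None -> forall F, is_even_cover F -> P F -> False.
Proof.
move=> E F ev pF; have [h _] := omin_big (index_enum {set edge G})
  (fun F => is_even_cover F && P F) (@exc G).
by apply: (h E F); rewrite ?mem_index_enum ?ev.
Qed.

Lemma minexc_some P k : minexc P = Some k ->
  (exists F, [/\ is_even_cover F, P F & exc F = k]) /\
  (forall F, is_even_cover F -> P F -> k <= exc F).
Proof.
move=> E; have [_ h] := omin_big (index_enum {set edge G})
  (fun F => is_even_cover F && P F) (@exc G).
have [[F /andP[_ /andP[ev pF]] ex] lo] := h k E; split; first by exists F.
by move=> F' ev' pF'; apply: lo; rewrite ?mem_index_enum ?ev'.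
Qed.

Lemma minexc_eq P Q : P =1 Q -> minexc P = minexc Q.
Proof. by move=> h; rewrite /minexc; apply: eq_bigl => F; rewrite h. Qed.
End MinExc.

Lemma minexc_eq_ev (G : mgraph) (P Q : pred {set edge G}) :
  (forall F, is_even_cover F -> P F = Q F) -> minexc P = minexc Q.
Proof.
move=> h; rewrite /minexc; apply: eq_bigl => F.
by case ev: (is_even_cover F) => //=; rewrite h.
Qed.

Section Chain.
Variables (G : mgraph) (VC : {set vert G}) (EC : {set edge G}) (x y : vert G)
  (e0 ek : edge G) (k : nat) (es : nat -> edge G) (Bs : nat -> {set vert G}).
Local Notation CUT := [set g | is_cut_edge VC EC g].
Local Notation comp v := [set w | connect (adj_on VC (EC :\: CUT)) v w].
Local Notation I := (VC :\: [set x; y]).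
Hypotheses
 (hsub : forall g, g \in EC -> (ends g).1 \in VC /\ (ends g).2 \in VC)
 (hk1 : 1 <= k) (hes0 : es 0 = e0) (hesk : es k = ek)
 (hcut : forall g, is_cut_edge VC EC g <-> exists2 i, i <= k & g = es i)
 (hcover : forall v, v \in VC -> exists2 i, i <= k.+1 & comp v = Bs i)
 (hcomps : forall i, i <= k.+1 -> exists2 v, v \in VC & Bs i = comp v)
 (hinj : forall i j, i <= k.+1 -> j <= k.+1 -> Bs i = Bs j -> i = j)
 (hB0 : Bs 0 = [set x]) (hBk : Bs k.+1 = [set y])
 (hjoin : forall i, i <= k ->
         ((ends (es i)).1 \in Bs i /\ (ends (es i)).2 \in Bs i.+1) \/
         ((ends (es i)).2 \in Bs i /\ (ends (es i)).1 \in Bs i.+1))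
 (hcond4 : forall g, g != e0 -> g != ek ->
         ((ends g).1 \in I) || ((ends g).2 \in I) ->
         [&& (ends g).1 \in I, (ends g).2 \in I & g \in EC]).

Lemma compE i v : i <= k.+1 -> v \in Bs i -> comp v = Bs i.
Proof.
move=> ik; have [w wVC ->] := hcomps ik; rewrite inE => h.
by rewrite (conn_set_eq (@adj_on_sym G VC _) h).
Qed.

Lemma Bidx i j v : i <= k.+1 -> j <= k.+1 -> v \in Bs i -> v \in Bs j -> i = j.
Proof. by move=> ik jk vi vj; apply: hinj => //; rewrite -(compE ik vi) (compE jk vj). Qed.

Lemma BVC i v : i <= k.+1 -> v \in Bs i -> v \in VC.
Proof.
move=> ik; have [w wVC ->] := hcomps ik; rewrite inE => h.
exact: conn_on_mem h wVC.
Qed.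

Lemma BI i v : 0 < i <= k -> v \in Bs i -> v \in I.
Proof.
case/andP=> i0 ik vi; have ik1 : i <= k.+1 by apply: leq_trans ik _.
rewrite !inE (BVC ik1 vi) andbT; apply/norP; split; apply/eqP => E; subst v.
  have := Bidx ik1 (leq0n _) vi; rewrite hB0 inE eqxx => /(_ isT) E.
  by rewrite E in i0.
have := Bidx ik1 (leqnn _) vi; rewrite hBk inE eqxx => /(_ isT) E.
by rewrite E ltnn in ik.
Qed.

Lemma xI : x \notin I. Proof. by rewrite !inE eqxx. Qed.
Lemma yI : y \notin I. Proof. by rewrite !inE eqxx orbT. Qed.

Lemma xy : x != y.
Proof.
apply/eqP => E; have := @Bidx 0 k.+1 x (leq0n _) (leqnn _).
by rewrite hB0 hBk E !inE eqxx => /(_ isT isT).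
Qed.

Lemma e0_ends : other_end e0 x \in I /\
  (ends e0 = (x, other_end e0 x) \/ ends e0 = (other_end e0 x, x)).
Proof.
have B1I v : v \in Bs 1 -> v \in I by apply: BI; rewrite hk1.
rewrite /other_end -hes0; case: (hjoin (leq0n k)) => [[]|[]]; rewrite hB0 inE => /eqP E1 h2.
  by rewrite E1 eqxx (B1I _ h2); split => //; left; rewrite -E1 -surjective_pairing.
have h2' := B1I _ h2; case: eqP => [E|_]; first by rewrite E (negbTE xI) in h2'.
by rewrite h2'; split=> //; right; rewrite -E1 -surjective_pairing.
Qed.

Lemma ek_ends : other_end ek y \in I /\
  (ends ek = (y, other_end ek y) \/ ends ek = (other_end ek y, y)).
Proof.
have BkI v : v \in Bs k -> v \in I by apply: BI; rewrite hk1 leqnn.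
rewrite /other_end -hesk; case: (hjoin (leqnn k)) => [[]|[]] h1; rewrite hBk inE => /eqP E2.
  have h1' := BkI _ h1; case: eqP => [E|_]; first by rewrite E (negbTE yI) in h1'.
  by rewrite h1'; split=> //; right; rewrite -E2 -surjective_pairing.
by rewrite E2 eqxx (BkI _ h1); split => //; left; rewrite -E2 -surjective_pairing.
Qed.

Lemma e0ek : e0 != ek.
Proof.
apply/eqP => E; case: e0_ends => x1I hx; case: ek_ends => ykI hy.
rewrite E in hx x1I.
case: hx => hx; case: hy => hy; rewrite hx in hy; case: hy => h1 h2;
  first [by move/eqP: xy; rewrite h1 | by move/eqP: xy; rewrite h2
        | by move: x1I; rewrite h1 (negbTE yI) | by move: x1I; rewrite h2 (negbTE yI)].
Qed.

Lemma crossI g : (((ends g).1 \in I) != ((ends g).2 \in I)) = (g == e0) || (g == ek).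
Proof.
case: (eqVneq g e0) => [->|g0].
  by case: e0_ends => x1I [] ->; rewrite /= x1I (negbTE xI).
case: (eqVneq g ek) => [->|gk].
  by case: ek_ends => ykI [] ->; rewrite /= ykI (negbTE yI).
have := hcond4 g0 gk; case: ((ends g).1 \in I); case: ((ends g).2 \in I) => //=.
  by move=> /(_ isT).
by move=> /(_ isT).
Qed.

Definition W i := [set v | [exists j : 'I_i.+1, (0 < j) && (v \in Bs j)]].

Lemma memW i j v : i <= k -> j <= k.+1 -> v \in Bs j -> (v \in W i) = (0 < j <= i).
Proof.
move=> ik jk vj; rewrite inE; apply/existsP/idP => [[j' /andP[j0 vj']]|/andP[j0 ji]].
  have j'k : j' <= k.+1 by have := ltn_ord j'; lia.
  by rewrite (Bidx jk j'k vj vj') j0 -ltnS ltn_ord.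
by exists (Ordinal (ji : j < i.+1)); rewrite j0 vj.
Qed.

Lemma WI i v : i <= k -> v \in W i -> v \in I.
Proof.
move=> ik; rewrite inE => /existsP[j /andP[j0 vj]]; apply: (BI (i := j)) vj.
by rewrite j0 (leq_trans _ ik) // -ltnS ltn_ord.
Qed.

Lemma cut_EC g : is_cut_edge VC EC g -> g \in EC.
Proof. by case/andP. Qed.

Lemma crossW i : 0 < i <= k -> forall g,
  (((ends g).1 \in W i) != ((ends g).2 \in W i)) = (g == e0) || (g == es i).
Proof.
case/andP => i0 ik g; apply/idP/idP => [cr|].
  case cg: (is_cut_edge VC EC g).
    have [j jk gj] := (hcut g).1 cg; subst g.
    have jk1 : j <= k.+1 by apply: leq_trans jk _.
    have j1k1 : j.+1 <= k.+1 by [].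
    move: cr; case: (hjoin jk) => -[h1 h2];
      rewrite (memW ik jk1 h1) (memW ik j1k1 h2) => cr.
    + case: (eqVneq j 0) => [j0'|jn0]; first by rewrite -hes0 j0' eqxx.
      case: (eqVneq j i) => [->|jni]; first by rewrite eqxx orbT.
      by exfalso; move: cr jn0 jni; lia.
    + case: (eqVneq j 0) => [j0'|jn0]; first by rewrite -hes0 j0' eqxx.
      case: (eqVneq j i) => [->|jni]; first by rewrite eqxx orbT.
      by exfalso; move: cr jn0 jni; lia.
  case gEC: (g \in EC).
    have [e1V e2V] := hsub gEC.
    have adj : adj_on VC (EC :\: CUT) (ends g).1 (ends g).2.
      by rewrite /adj_on e1V e2V; apply: edge_adj; rewrite !inE cg gEC.
    have [j jk cj] := hcover e1V.
    have e1j : (ends g).1 \in Bs j by rewrite -cj inE connect0.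
    have e2j : (ends g).2 \in Bs j by rewrite -cj inE connect1.
    by move: cr; rewrite (memW ik jk e1j) (memW ik jk e2j) eqxx.
  exfalso.
  have g0 : g != e0.
    by apply/eqP => E; move: gEC; rewrite E cut_EC //; apply/(hcut e0).2; exists 0.
  have gk : g != ek.
    by apply/eqP => E; move: gEC; rewrite E cut_EC //; apply/(hcut ek).2; exists k.
  have : ((ends g).1 \in I) || ((ends g).2 \in I).
    by move: cr; case e1: ((ends g).1 \in W i) => /=; [rewrite (WI ik e1) | move=> e2; rewrite (WI (v := (ends g).2) ik) ?orbT //; move: e2; case: (_ \in _)].
  by move/(hcond4 g0 gk) => /and3P[_ _]; rewrite gEC.
case/orP => /eqP ->.
  rewrite -hes0; have k1 : 1 <= k.+1 by [].
  by case: (hjoin (leq0n k)) => -[h1 h2]; rewrite (memW ik (leq0n _) h1) (memW ik k1 h2) /= i0.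
have ik1 : i <= k.+1 by apply: leq_trans ik _.
have i1k1 : i.+1 <= k.+1 by [].
by case: (hjoin ik) => -[h1 h2]; rewrite (memW ik ik1 h1) (memW ik i1k1 h2) i0 leqnn ltnn.
Qed.

Lemma es_F (F : {set edge G}) i : is_even_cover F -> i <= k -> (es i \in F) = (e0 \in F).
Proof.
move=> ev ik; case: (posnP i) => [->|i0]; first by rewrite hes0.
symmetry; apply: (parity2 (S := W i)) => //; last by apply: crossW; rewrite i0.
apply/eqP => E.
have ik1 : i <= k.+1 by apply: leq_trans ik _.
have i1k1 : i.+1 <= k.+1 by [].
have hx : x \in Bs i \/ x \in Bs i.+1.
  case: e0_ends => _ [] h; case: (hjoin ik) => -[h1 h2]; rewrite -E h /= in h1 h2; tauto.
have x0 : x \in Bs 0 by rewrite hB0 inE.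
case: hx => hx.
  by have := Bidx ik1 (leq0n _) hx x0 => E'; rewrite E' in i0.
by have := Bidx i1k1 (leq0n _) hx x0.
Qed.

Lemma e_in (F : {set edge G}) e : is_even_cover F -> is_cut_edge VC EC e ->
  (e \in F) = (e0 \in F).
Proof. by move=> ev /hcut [i ik ->]; apply: es_F. Qed.
End Chain.

Section Main.
Variables (G : mgraph) (VC : {set vert G}) (EC : {set edge G}) (x y : vert G) (e0 ek : edge G).
Local Notation I := (VC :\: [set x; y]).
Local Notation x1 := (other_end e0 x).
Local Notation yk := (other_end ek y).
Hypotheses (xI : x \notin I) (yI : y \notin I) (x1I : x1 \in I) (ykI : yk \in I)
  (he0 : ends e0 = (x, x1) \/ ends e0 = (x1, x))
  (hek : ends ek = (y, yk) \/ ends ek = (yk, y))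
  (e0ek : e0 != ek)
  (crossI : forall g, (((ends g).1 \in I) != ((ends g).2 \in I)) = (g == e0) || (g == ek))
  (hEC : forall g, (ends g).1 \in I -> (ends g).2 \in I -> g \in EC).

Lemma hA_H g : (ends g).1 \in ~: I -> (ends g).2 \in ~: I -> g \in [set: edge G].
Proof. by rewrite in_setT. Qed.
Lemma xS : x \in ~: I. Proof. by rewrite in_setC. Qed.
Lemma yS : y \in ~: I. Proof. by rewrite in_setC. Qed.
Lemma cross_H g : (((ends g).1 \in ~: I) != ((ends g).2 \in ~: I)) = (g == e0) || (g == ek).
Proof. by rewrite !in_setC -crossI; case: (_ \in I); case: (_ \in I). Qed.

Lemma incid_pair g p q v : ends g = (p, q) \/ ends g = (q, p) -> q \in I -> v \notin I ->
  incid g v = (v == p).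
Proof.
move=> hg qI vI; have qv : (q == v) = false by apply/eqP => E; move: vI; rewrite -E qI.
by rewrite /incid; case: hg => ->; rewrite /= qv ?addn0 eq_sym.
Qed.
Lemma incid_pair' g p q v : ends g = (p, q) \/ ends g = (q, p) -> q \notin I -> v \in I ->
  incid g v = (v == p).
Proof.
move=> hg qI vI; have qv : (q == v) = false by apply/eqP => E; move: qI; rewrite E vI.
by rewrite /incid; case: hg => ->; rewrite /= qv ?addn0 eq_sym.
Qed.

Lemma hc1_H v : v \in ~: I -> incid e0 v = (v == x).
Proof. by rewrite in_setC => vI; apply: incid_pair he0 x1I vI. Qed.
Lemma hc2_H v : v \in ~: I -> incid ek v = (v == y).
Proof. by rewrite in_setC => vI; apply: incid_pair hek ykI vI. Qed.
Lemma hc1_K v : v \in I -> incid e0 v = (v == x1).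
Proof.
move=> vI; apply: (incid_pair' (q := x)) xI vI.
by case: he0 => ->; [right|left].
Qed.
Lemma hc2_K v : v \in I -> incid ek v = (v == yk).
Proof.
move=> vI; apply: (incid_pair' (q := y)) yI vI.
by case: hek => ->; [right|left].
Qed.

Local Notation H := (restrict_add (~: I) [set: edge G] x y).
Local Notation K := (restrict_add I EC x1 yk).
Local Notation trH F := (tr (~: I) [set: edge G] x y e0 F).
Local Notation trK F := (tr I EC x1 yk e0 F).

Lemma h12 F : is_even_cover F -> (e0 \in F) = (ek \in F).
Proof. by move=> ev; apply: (parity2 (S := I)). Qed.

Lemma ev_H F : is_even_cover F -> is_even_cover (trH F).
Proof. by move=> ev; apply: (ev_tr hA_H xS yS cross_H e0ek hc1_H hc2_H ev (h12 ev)). Qed.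
Lemma ev_K F : is_even_cover F -> is_even_cover (trK F).
Proof. by move=> ev; apply: (ev_tr hEC x1I ykI crossI e0ek hc1_K hc2_K ev (h12 ev)). Qed.

Lemma sum_split (f : vert G -> nat) :
  \sum_v f v = \sum_(v in ~: I) f v + \sum_(v in I) f v.
Proof.
rewrite (bigID (mem I)) /= addnC; congr (_ + _); apply: eq_bigl => v; by rewrite !inE.
Qed.

Lemma niso_split F : is_even_cover F -> niso F = niso (trH F) + niso (trK F).
Proof.
move=> ev; rewrite (niso_side hA_H xS yS cross_H e0ek hc1_H hc2_H (h12 ev)).
rewrite (niso_side hEC x1I ykI crossI e0ek hc1_K hc2_K (h12 ev)).
by rewrite /niso card_set_sum sum_split.
Qed.

Lemma ncyc_split3 F : is_even_cover F ->
  ncyc (trH F) + ncyc (trK F) = ncyc F + (e0 \in F).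
Proof.
move=> ev; apply/eqP; rewrite -(eqr_nat rat) !natrD.
rewrite (ncyc_side hA_H xS yS cross_H e0ek hc1_H hc2_H ev (h12 ev)).
rewrite (ncyc_side hEC x1I ykI crossI e0ek hc1_K hc2_K ev (h12 ev)).
have hx : (e0 \in F) -> deg_in F x != 0.
  by move=> e0F; apply: (deg_pos e0F); rewrite hc1_H ?xS ?eqxx.
rewrite (ncyc_split hx).
have cx1 : forall v, (e0 \in F) && connect (adjA F) x1 v = (e0 \in F) && connect (adjA F) x v.
  move=> v; case e0F: (e0 \in F) => //=.
  have : adjA F x x1 by have := edge_adj e0F; case: he0 => -> //=; rewrite adjA_sym.
  by move/(adj_conn_eq v); rewrite !(connectA_sym _ v) => ->.
have -> : (\sum_(v in I | (deg_in F v != 0) && ~~ ((e0 \in F) && connect (adjA F) x1 v))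
    1 / (#|[set w | connect (adjA F) v w]|)%:R =
  \sum_(v in I | (deg_in F v != 0) && ~~ ((e0 \in F) && connect (adjA F) x v))
    1 / (#|[set w | connect (adjA F) v w]|)%:R :> rat)%R.
  by apply: eq_bigl => v; rewrite cx1.
apply/eqP; rewrite [X in (_ = X + _ + _)%R](bigID (mem I)) /=.
rewrite addrACA -[RHS]addrA; congr (_ + _)%R.
rewrite addrC; congr (_ + _)%R.
  by apply: eq_bigl => v; rewrite andbC.
by apply: eq_bigl => v; rewrite !inE andbC.

Qed.

Lemma exc_split F : is_even_cover F ->
  exc (trH F) + exc (trK F) = exc F + 2 * (e0 \in F).
Proof.
move=> ev; rewrite /exc (niso_split ev); have := ncyc_split3 ev.
lia.
Qed.

Local Notation PH g := ([&& g \in [set: edge G], (ends g).1 \in ~: I & (ends g).2 \in ~: I]).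
Local Notation PK g := ([&& g \in EC, (ends g).1 \in I & (ends g).2 \in I]).

Lemma PH_e0 : PH e0 = false.
Proof. by case: he0 => ->; rewrite /= !in_setC x1I ?andbF. Qed.
Lemma PH_ek : PH ek = false.
Proof. by case: hek => ->; rewrite /= !in_setC ykI ?andbF. Qed.
Lemma PK_e0 : PK e0 = false.
Proof. by case: he0 => ->; rewrite /= (negbTE xI) ?andbF. Qed.
Lemma PK_ek : PK ek = false.
Proof. by case: hek => ->; rewrite /= (negbTE yI) ?andbF. Qed.

Definition glue (F1 : {set edge H}) (F2 : {set edge K}) : {set edge G} :=
  [set g | match (insub g : option {g | PH g}) with
           | Some s => (Some s : edge H) \in F1
           | None => match (insub g : option {g | PK g}) with
                     | Some s => (Some s : edge K) \in F2
                     | None => ((None : edge H) \in F1) && ((g == e0) || (g == ek))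
                     end end].

Lemma glue_e0 (F1 : {set edge H}) (F2 : {set edge K}) : (e0 \in glue F1 F2) = ((None : edge H) \in F1).
Proof. by rewrite inE insubF ?PH_e0 // insubF ?PK_e0 // eqxx /= andbT. Qed.
Lemma glue_ek (F1 : {set edge H}) (F2 : {set edge K}) : (ek \in glue F1 F2) = ((None : edge H) \in F1).
Proof. by rewrite inE insubF ?PH_ek // insubF ?PK_ek // eqxx orbT andbT. Qed.

Lemma glue_trH (F1 : {set edge H}) (F2 : {set edge K}) : trH (glue F1 F2) = F1.
Proof.
apply: tr_glue; last by rewrite glue_e0.
by move=> s; rewrite inE valK.
Qed.

Lemma glue_trK (F1 : {set edge H}) (F2 : {set edge K}) : ((None : edge H) \in F1) = ((None : edge K) \in F2) ->
  trK (glue F1 F2) = F2.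
Proof.
move=> hN; apply: tr_glue; last by rewrite glue_e0.
move=> s; rewrite inE insubF ?valK //.
have := valP s; case/and3P => _ h1 _; by rewrite /= !in_setC h1 andbF.
Qed.

Lemma glue_ev (F1 : {set edge H}) (F2 : {set edge K}) : is_even_cover F1 -> is_even_cover F2 ->
  ((None : edge H) \in F1) = ((None : edge K) \in F2) ->
  is_even_cover (glue F1 F2).
Proof.
move=> ev1 ev2 hN; have h12g : (e0 \in glue F1 F2) = (ek \in glue F1 F2).
  by rewrite glue_e0 glue_ek.
apply/forallP => v; case vI: (v \in I).
  have := deg_tr hEC x1I ykI crossI e0ek hc1_K hc2_K h12g (lft I EC x1 yk v).
  rewrite lftK // glue_trK // => <-; by move/forallP: ev2.
have vS : v \in ~: I by rewrite in_setC vI.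
have := deg_tr hA_H xS yS cross_H e0ek hc1_H hc2_H h12g (lft (~: I) [set: edge G] x y v).
rewrite lftK // glue_trH => <-; by move/forallP: ev1.
Qed.

Lemma base_split : base_val G = (base_val H + base_val K)%R.
Proof.
rewrite /base_val (n_side [set: edge G] xS yS) (n_side EC x1I ykI).
rewrite (n2_side hA_H xS yS cross_H e0ek hc1_H hc2_H) (n2_side hEC x1I ykI crossI e0ek hc1_K hc2_K).
have -> : n_of G = #|~: I| + #|I| by rewrite /n_of -(cardsC I) addnC.
have -> : n2_of G = \sum_(v in ~: I) (deg v == 2 : nat) + \sum_(v in I) (deg v == 2 : nat).
  by rewrite /n2_of card_set_sum sum_split.
rewrite -mulrDl; congr (_ / _)%R; rewrite -natrD; congr (_%:R)%R; lia.
Qed.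

Section Core.
Variable b : bool.
Local Notation mG := (minexc (G := G) (fun F => (e0 \in F) == b)).
Local Notation mH := (minexc (G := H) (fun F => ((None : edge H) \in F) == b)).
Local Notation mK := (minexc (G := K) (fun F => ((None : edge K) \in F) == b)).

Lemma core_lo F : is_even_cover F -> (e0 \in F) == b ->
  forall p q, mH = Some p -> mK = Some q -> p + q <= exc F + 2 * b.
Proof.
move=> ev Pb p q E1 E2.
have [_ lo1] := minexc_some E1; have [_ lo2] := minexc_some E2.
have n1 : ((None : edge H) \in trH F) == b by rewrite inE.
have n2 : ((None : edge K) \in trK F) == b by rewrite inE.
have l1 := lo1 _ (ev_H ev) n1.
have l2 := lo2 _ (ev_K ev) n2.
have ex := exc_split ev; move/eqP: Pb => Pb; rewrite Pb in ex.
lia.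
Qed.

Lemma core_some p q : mH = Some p -> mK = Some q -> mG = Some (p + q - 2 * b) /\ 2 * b <= p + q.
Proof.
move=> E1 E2.
have [[F1 [ev1 P1 ex1]] _] := minexc_some E1.
have [[F2 [ev2 P2 ex2]] _] := minexc_some E2.
have hN : ((None : edge H) \in F1) = ((None : edge K) \in F2).
  by move/eqP: P1 => ->; move/eqP: P2 => ->.
have evF := glue_ev ev1 ev2 hN.
have PF : (e0 \in glue F1 F2) == b by rewrite glue_e0.
have ex := exc_split evF; rewrite glue_trH glue_trK // ex1 ex2 in ex.
move/eqP: PF => PF; rewrite PF in ex.
move: (glue F1 F2) evF PF ex => F evF PF ex.
have PF' : (e0 \in F) == b by rewrite PF.
case EG: mG => [m|]; last by case: (minexc_none EG evF PF').
have [[F' [ev' P' ex']] lo] := minexc_some EG.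
have hm := lo F evF PF'.
have hl := core_lo ev' P' E1 E2.
rewrite ex' in hl; move: hm hl ex; clear; move: (exc F) => n hm hl ex.
split; [congr Some|]; case: b hm hl ex => /= hm hl ex; lia.
Qed.

Lemma core_none : mH = None \/ mK = None -> mG = None.
Proof.
move=> hN; case EG: mG => [m|] //.
have [[F' [ev' P' ex']] _] := minexc_some EG.
case: hN => hN.
  by case: (minexc_none hN (ev_H ev')); rewrite inE.
by case: (minexc_none hN (ev_K ev')); rewrite inE.
Qed.
End Core.
End Main.

Theorem proposition2p2 (G : mgraph) (VC : {set vert G}) (EC : {set edge G})
    (x y : vert G) (e0 ek e : edge G) :
  subcubic_chain_of VC EC x y e0 ek ->
  is_cut_edge VC EC e ->
  delta e = oaddq (delta (e_contract VC x y)) (delta (e_closure VC EC x y e0 ek))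
  /\
  deltahat e = oaddq (deltahat (e_contract VC x y)) (deltahat (e_closure VC EC x y e0 ek)).
Proof.
move=> [hchain Inz Iconn hc4] hcute.
case: hchain => k [es [Bs]] /=.
move=> [[hsub hsimp hsimp2 hconn hdeg] [hk1 hes0 hesk hcut] [hcover hcomps hinj [hB0 hBk htwo hjoin]]].
have xI : x \notin VC :\: [set x; y] by rewrite !inE eqxx.
have yI : y \notin VC :\: [set x; y] by rewrite !inE eqxx orbT.
have [x1I he0] : other_end e0 x \in VC :\: [set x; y] /\
  (ends e0 = (x, other_end e0 x) \/ ends e0 = (other_end e0 x, x)).
  by eapply e0_ends; eassumption.
have [ykI hek] : other_end ek y \in VC :\: [set x; y] /\
  (ends ek = (y, other_end ek y) \/ ends ek = (other_end ek y, y)).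
  by eapply ek_ends; eassumption.
have e0ek : e0 != ek by eapply e0ek; eassumption.
have crossI : forall g, (((ends g).1 \in VC :\: [set x; y]) != ((ends g).2 \in VC :\: [set x; y]))
   = (g == e0) || (g == ek).
  by move=> g; eapply crossI; eassumption.
have hEC : forall g, (ends g).1 \in VC :\: [set x; y] -> (ends g).2 \in VC :\: [set x; y] -> g \in EC.
  move=> g h1 h2; have nc := crossI g; rewrite h1 h2 /= in nc.
  move/esym/norP: nc => [g0 gk].
  have h12 : ((ends g).1 \in VC :\: [set x; y]) || ((ends g).2 \in VC :\: [set x; y]) by rewrite h1.
  by case/and3P: (hc4 g g0 gk h12).
have e_F : forall F, is_even_cover F -> (e \in F) = (e0 \in F).
  by move=> F ev; eapply e_in; eassumption.
set Hc := contract_chain VC x y.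
set Kc := chain_closure VC EC x y e0 ek.
have BS : base_val G = (base_val Hc + base_val Kc)%R :=
  base_split xI yI x1I ykI he0 hek e0ek crossI hEC.
have CS : forall b p q,
  minexc (G := Hc) (fun F => (e_contract VC x y \in F) == b) = Some p ->
  minexc (G := Kc) (fun F => (e_closure VC EC x y e0 ek \in F) == b) = Some q ->
  minexc (G := G) (fun F => (e0 \in F) == b) = Some (p + q - 2 * b) /\ 2 * b <= p + q.
  by move=> b p q E1 E2; apply: (core_some xI yI x1I ykI he0 hek e0ek crossI hEC E1 E2).
have CN : forall b,
  minexc (G := Hc) (fun F => (e_contract VC x y \in F) == b) = None \/
  minexc (G := Kc) (fun F => (e_closure VC EC x y e0 ek \in F) == b) = None ->
  minexc (G := G) (fun F => (e0 \in F) == b) = None.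
  by move=> b hN; apply: (core_none xI yI x1I ykI he0 hek e0ek crossI hEC hN).
have EG b : minexc (G := G) (fun F => if b then e \in F else e \notin F) =
            minexc (G := G) (fun F => (e0 \in F) == b).
  by apply: minexc_eq_ev => F ev; rewrite e_F //; case: b; case: (e0 \in F).
have EH b : minexc (G := Hc) (fun F => if b then e_contract VC x y \in F else e_contract VC x y \notin F) =
            minexc (G := Hc) (fun F => (e_contract VC x y \in F) == b).
  by apply: minexc_eq => F; case: b; case: (_ \in F).
have EK b : minexc (G := Kc) (fun F => if b then e_closure VC EC x y e0 ek \in F
                                       else e_closure VC EC x y e0 ek \notin F) =
            minexc (G := Kc) (fun F => (e_closure VC EC x y e0 ek \in F) == b).
  by apply: minexc_eq => F; case: b; case: (_ \in F).
split.
  rewrite /delta; move: (EG true) (EH true) (EK true) => /= -> -> ->.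
  case E1: (minexc (G := Hc) _) => [p|] /=; last by rewrite CN //; left.
  case E2: (minexc (G := Kc) _) => [q|] /=; last by rewrite CN //; right.
  have [-> le] := CS true p q E1 E2; rewrite /= BS; congr Some.
  rewrite natrB // natrD; move: (base_val Hc) (base_val Kc) => u v; lra.
rewrite /deltahat; move: (EG false) (EH false) (EK false) => /= -> -> ->.
case E1: (minexc (G := Hc) _) => [p|] /=; last by rewrite CN //; left.
case E2: (minexc (G := Kc) _) => [q|] /=; last by rewrite CN //; right.
have [-> le] := CS false p q E1 E2; rewrite /= BS; congr Some.
rewrite muln0 subn0 natrD; move: (base_val Hc) (base_val Kc) => u v; lra.
Qed.
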